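(* If a topological dynamical system $(X,T)$ is an almost one-to-one extension of a minimal equicontinuous system $(Y,S)$ (i.e. there is an almost one-to-one factor map $\pi:(X,T)\to(Y,S)$), then $(X,T)$ is syndetically equicontinuous, i.e. $\mathrm{Eq}_{\mathrm{syn}}(X,T)=X$.
   Context: Systems: compact metric $(X,\varrho)$ with continuous surjection $T$. Factor map: continuous surjection $\pi$ with $\pi\circ T=S\circ\pi$; almost one-to-one: $\{y:\pi^{-1}(y)\text{ is a singleton}\}$ is dense in $Y$. Equicontinuous: the family $\{S^n\}_{n\ge0}$ is equicontinuous. $S_T(U,\delta)=\{n\in\mathbb{N}:\exists x_1,x_2\in U,\ \varrho(T^nx_1,T^nx_2)>\delta\}$, $J_T(U,\delta)=\mathbb N\setminus S_T(U,\delta)$. $x\in\mathrm{Eq}_{\mathrm{syn}}(X,T)$ iff for every $\varepsilon>0$ some neighborhood $U$ of $x$ has $J_T(U,\varepsilon)$ syndetic (bounded gaps). *)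

(* Defs.v *)
From Stdlib Require Import Reals List.
Open Scope R_scope.

Section Metric.
Context {X : Type} (d : X -> X -> R).

Definition is_metric : Prop :=
  (forall x y, 0 <= d x y) /\
  (forall x y, d x y = 0 <-> x = y) /\
  (forall x y, d x y = d y x) /\
  (forall x y z, d x z <= d x y + d y z).

Definition ball (x : X) (r : R) : X -> Prop := fun y => d x y < r.

Definition is_open (U : X -> Prop) : Prop :=
  forall x, U x -> exists r, 0 < r /\ forall y, ball x r y -> U y.

Definition nbhd (x : X) (U : X -> Prop) : Prop :=
  exists V, is_open V /\ V x /\ forall y, V y -> U y.

Definition compact_space : Prop :=
  forall (I : Type) (U : I -> X -> Prop),
    (forall i, is_open (U i)) -> (forall x, exists i, U i x) ->
    exists l : list I, forall x, exists i, In i l /\ U i x.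

Definition is_closed (A : X -> Prop) : Prop := is_open (fun x => ~ A x).

Definition dense (A : X -> Prop) : Prop :=
  forall x eps, 0 < eps -> exists y, A y /\ d x y < eps.

End Metric.

Definition continuous_map {X Y : Type} (dX : X -> X -> R) (dY : Y -> Y -> R)
  (f : X -> Y) : Prop :=
  forall x eps, 0 < eps -> exists delta, 0 < delta /\
    forall x', dX x x' < delta -> dY (f x) (f x') < eps.

Definition tds {X : Type} (d : X -> X -> R) (T : X -> X) : Prop :=
  is_metric d /\ compact_space d /\ continuous_map d d T /\
  (forall y, exists x, T x = y).

Definition factor_map {X Y : Type} (dX : X -> X -> R) (dY : Y -> Y -> R)
  (T : X -> X) (S : Y -> Y) (pi : X -> Y) : Prop :=
  continuous_map dX dY pi /\ (forall y, exists x, pi x = y) /\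
  (forall x, pi (T x) = S (pi x)).

Definition almost_one_to_one {X Y : Type} (dY : Y -> Y -> R) (pi : X -> Y) : Prop :=
  dense dY (fun y => exists x, forall x', pi x' = y <-> x' = x).

Definition minimal {Y : Type} (d : Y -> Y -> R) (S : Y -> Y) : Prop :=
  forall A : Y -> Prop, is_closed d A -> (forall y, A y -> A (S y)) ->
    (exists y, A y) -> forall y, A y.

Definition equicontinuous {Y : Type} (d : Y -> Y -> R) (S : Y -> Y) : Prop :=
  forall y eps, 0 < eps -> exists delta, 0 < delta /\
    forall y' n, d y y' < delta -> d (Nat.iter n S y) (Nat.iter n S y') < eps.

(* J_T(U, delta) = N \ S_T(U, delta) *)
Definition J_T {X : Type} (d : X -> X -> R) (T : X -> X) (U : X -> Prop)
  (delta : R) (n : nat) : Prop :=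
  ~ (exists x1 x2, U x1 /\ U x2 /\ d (Nat.iter n T x1) (Nat.iter n T x2) > delta).

Definition syndetic (A : nat -> Prop) : Prop :=
  exists L : nat, (0 < L)%nat /\ forall m, exists n, (m <= n < m + L)%nat /\ A n.

Definition Eq_syn {X : Type} (d : X -> X -> R) (T : X -> X) (x : X) : Prop :=
  forall eps, 0 < eps -> exists U, nbhd d x U /\ syndetic (J_T d T U eps).

(* Main.v *)
Require Import Defs.
From Stdlib Require Import Reals.
From Stdlib Require Import Reals List Lra Lia Classical.
Open Scope R_scope.

Lemma open_preimage_ball {X Y : Type} (dX : X -> X -> R) (dY : Y -> Y -> R)
  (f : X -> Y) (HY : is_metric dY) (Hf : continuous_map dX dY f) (a : Y) (r : R) :
  is_open dX (fun z => dY a (f z) < r).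
Proof.
  destruct HY as [Hnn [H0 [Hsym Htri]]].
  intros z Hz. destruct (Hf z (r - dY a (f z))) as [dl [Hdl Hc]]; [lra|].
  exists dl; split; [exact Hdl|]. intros z' Hz'. unfold ball in Hz'.
  specialize (Hc z' Hz'). specialize (Htri a (f z) (f z')). lra.
Qed.

Lemma iter_cont {Y : Type} (dY : Y -> Y -> R) (S : Y -> Y)
  (HS : continuous_map dY dY S) (k : nat) : continuous_map dY dY (Nat.iter k S).
Proof.
  induction k as [|k IH]; simpl.
  - intros y eps Heps. exists eps; split; auto.
  - intros y eps Heps. destruct (HS (Nat.iter k S y) eps Heps) as [d1 [Hd1 H1]].
    destruct (IH y d1 Hd1) as [d2 [Hd2 H2]].
    exists d2; split; auto. intros x' Hx'. apply H1. apply H2. exact Hx'.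
Qed.

Lemma iter_comm {X Y : Type} (T : X -> X) (S : Y -> Y) (pi : X -> Y)
  (H : forall x, pi (T x) = S (pi x)) n x :
  pi (Nat.iter n T x) = Nat.iter n S (pi x).
Proof. induction n as [|n IH]; [reflexivity|]. change (pi (T (Nat.iter n T x)) = S (Nat.iter n S (pi x))). rewrite H, IH. reflexivity. Qed.

Lemma iter_S_r {Y : Type} (S : Y -> Y) k y : Nat.iter k S (S y) = Nat.iter (Datatypes.S k) S y.
Proof. induction k as [|k IH]; [reflexivity|]. change (S (Nat.iter k S (S y)) = S (Nat.iter (Datatypes.S k) S y)). rewrite IH. reflexivity. Qed.

Lemma iter_add' {Y : Type} (S : Y -> Y) k m y :
  Nat.iter k S (Nat.iter m S y) = Nat.iter (m + k) S y.
Proof.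
  revert y. induction m; intros y; simpl.
  - reflexivity.
  - rewrite <- IHm. rewrite iter_S_r. reflexivity.
Qed.

Lemma list_min_pos {I : Type} (f : I -> R) (l : list I) :
  exists dl, 0 < dl /\ forall i, In i l -> 0 < f i -> dl <= f i.
Proof.
  induction l as [|a l [dl [Hdl H]]].
  - exists 1; split; [lra|]. intros i [].
  - destruct (Rlt_dec 0 (f a)) as [Ha|Ha].
    + exists (Rmin dl (f a)); split; [apply Rmin_pos; lra|].
      intros i [<-|Hi] Hp.
      * apply Rmin_r.
      * eapply Rle_trans; [apply Rmin_l| auto].
    + exists dl; split; auto. intros i [<-|Hi] Hp; [lra| auto].
Qed.

Lemma list_max_nat (l : list nat) : exists K, forall k, In k l -> (k <= K)%nat.
Proof.
  induction l as [|a l [K H]].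
  - exists 0%nat; intros k [].
  - exists (Nat.max a K). intros k [<-|Hk]; [lia|]. specialize (H k Hk); lia.
Qed.

Lemma fiber_lemma {X Y : Type} (dX : X -> X -> R) (dY : Y -> Y -> R) (pi : X -> Y)
  (HXm : is_metric dX) (HXc : compact_space dX) (HYm : is_metric dY)
  (Hc : continuous_map dX dY pi) (y0 : Y) (x0 : X)
  (Hfib : forall x', pi x' = y0 <-> x' = x0) (e : R) (He : 0 < e) :
  exists dl, 0 < dl /\ forall z, dY y0 (pi z) < dl -> dX x0 z < e.
Proof.
  pose proof HXm as [Xnn [X0 [Xsym Xtri]]].
  pose proof HYm as [Ynn [Y0 [Ysym Ytri]]].
  set (U := fun (z z' : X) => dX x0 z' < e \/ dY (pi z) (pi z') < dY (pi z) y0 / 2).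
  destruct (HXc X U) as [l Hl].
  - intros z. intros z' Hz'. destruct Hz' as [H|H].
    + destruct (open_preimage_ball dX dX (fun w => w) HXm
         (fun x eps Heps => ex_intro _ eps (conj Heps (fun x' H => H))) x0 e z' H)
        as [r [Hr Hb]].
      exists r; split; auto. intros w Hw; left; apply Hb; auto.
    + destruct (open_preimage_ball dX dY pi HYm Hc (pi z) (dY (pi z) y0 / 2) z' H)
        as [r [Hr Hb]].
      exists r; split; auto. intros w Hw; right; apply Hb; auto.
  - intros z'. exists z'. unfold U.
    destruct (Rlt_dec (dX x0 z') e) as [H|H]; [left; auto|right].
    assert (pi z' <> y0).
    { intros Heq. apply Hfib in Heq. subst z'. apply H. 
      assert (dX x0 x0 = 0) by (apply X0; auto). lra. }
    assert (dY (pi z') (pi z') = 0) by (apply Y0; auto).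
    assert (dY (pi z') y0 <> 0) by (intros Hz; apply Y0 in Hz; auto).
    specialize (Ynn (pi z') y0). lra.
  - destruct (list_min_pos (fun z => dY (pi z) y0 / 2) l) as [dl [Hdl Hm]].
    exists dl; split; auto. intros z' Hz'.
    destruct (Hl z') as [z [Hin [H|H]]]; auto.
    exfalso. specialize (Ynn (pi z) (pi z')).
    assert (Hpos : 0 < dY (pi z) y0 / 2) by lra.
    specialize (Hm z Hin Hpos). specialize (Ytri (pi z) (pi z') y0).
    rewrite (Ysym (pi z') y0) in Ytri. lra.
Qed.

Lemma recurrence {Y : Type} (dY : Y -> Y -> R) (S : Y -> Y) (HY : tds dY S)
  (Hmin : minimal dY S) (y0 : Y) (r : R) (Hr : 0 < r) (y : Y) :
  syndetic (fun n => dY y0 (Nat.iter n S y) < r).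
Proof.
  destruct HY as [HYm [HYc [HYs _]]].
  pose proof HYm as [Ynn [Y0 [Ysym Ytri]]].
  assert (Hall : forall z, exists k, dY y0 (Nat.iter k S z) < r).
  { set (A := fun z => forall k, ~ dY y0 (Nat.iter k S z) < r).
    assert (HA : forall z, ~ A z).
    { intros z Az.
      assert (A y0) as Ay0.
      { apply (Hmin A).
        - intros w Hw. apply not_all_not_ex in Hw. destruct Hw as [k Hk].
          destruct (open_preimage_ball dY dY (Nat.iter k S) HYm (iter_cont dY S HYs k)
                      y0 r w Hk) as [s [Hs Hb]].
          exists s; split; auto. intros w' Hw' Aw'. apply (Aw' k). apply Hb; auto.
        - intros w Aw k. rewrite iter_S_r. apply Aw.
        - exists z; auto. }
      apply (Ay0 0%nat). simpl. assert (dY y0 y0 = 0) by (apply Y0; auto). lra. }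
    intros z. specialize (HA z). unfold A in HA.
    apply not_all_not_ex in HA. auto. }
  destruct (HYc nat (fun k z => dY y0 (Nat.iter k S z) < r)) as [l Hl].
  - intros k. apply open_preimage_ball; auto. apply iter_cont; auto.
  - exact Hall.
  - destruct (list_max_nat l) as [K HK].
    exists (Datatypes.S K). split; [lia|]. intros m.
    destruct (Hl (Nat.iter m S y)) as [k [Hin Hk]].
    exists (m + k)%nat. split.
    + specialize (HK k Hin). lia.
    + rewrite <- iter_add'. auto.
Qed.

Theorem proposition4p2 (X Y : Type) (dX : X -> X -> R) (dY : Y -> Y -> R)
  (T : X -> X) (S : Y -> Y) (pi : X -> Y)
  (HX : tds dX T) (HY : tds dY S)
  (Hpi : factor_map dX dY T S pi) (Hpi1 : almost_one_to_one dY pi)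
  (Hmin : minimal dY S) (Heq : equicontinuous dY S) :
  forall x : X, Eq_syn dX T x.
Proof.
  intros x e He.
  pose proof HX as [HXm [HXc _]].
  pose proof HY as [HYm _].
  pose proof HXm as [Xnn [X0 [Xsym Xtri]]].
  pose proof HYm as [Ynn [Y0 [Ysym Ytri]]].
  destruct Hpi as [Hc [_ Hcomm]].
  destruct (Hpi1 (pi x) 1) as [y0 [[x0 Hfib] _]]; [lra|].
  destruct (fiber_lemma dX dY pi HXm HXc HYm Hc y0 x0 Hfib (e/2)) as [dl [Hdl Hf]]; [lra|].
  destruct (Heq (pi x) (dl/2)) as [eta [Heta Hq]]; [lra|].
  exists (fun z => dY (pi x) (pi z) < eta). split.
  - exists (fun z => dY (pi x) (pi z) < eta). split; [|split; auto].
    + apply open_preimage_ball; auto.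
    + assert (dY (pi x) (pi x) = 0) by (apply Y0; auto). lra.
  - destruct (recurrence dY S HY Hmin y0 (dl/2) ltac:(lra) (pi x)) as [L [HL HLm]].
    exists L. split; auto. intros m. destruct (HLm m) as [n [Hn Hr]].
    exists n. split; auto. intros [x1 [x2 [H1 [H2 H12]]]].
    assert (Hclose : forall xi, dY (pi x) (pi xi) < eta -> dX x0 (Nat.iter n T xi) < e/2).
    { intros xi Hi. apply Hf. rewrite (iter_comm T S pi Hcomm).
      specialize (Hq (pi xi) n Hi).
      specialize (Ytri y0 (Nat.iter n S (pi x)) (Nat.iter n S (pi xi))). lra. }
    pose proof (Hclose x1 H1). pose proof (Hclose x2 H2).
    specialize (Xtri (Nat.iter n T x1) x0 (Nat.iter n T x2)).
    rewrite (Xsym (Nat.iter n T x1) x0) in Xtri. lra.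
Qed.
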